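(* Let $\mathbf{Y}\in\mathbb{R}^{d_1\times d_2}$, let $R\ge r$ be positive integers, and let $\mathbf{X}=\Pi_r(\mathbf{Y})$ with SVD $\mathbf{X}=\mathbf{U}\boldsymbol\Sigma\mathbf{V}^T$. Suppose there exist $\overline{\mathbf{U}}\in\mathbb{R}^{d_1\times R}$ and $\overline{\mathbf{V}}\in\mathbb{R}^{d_2\times R}$ such that $\mathrm{col}(\mathbf{U})\subseteq\mathrm{col}(\overline{\mathbf{U}})$, $\mathrm{col}(\mathbf{V})\subseteq\mathrm{col}(\overline{\mathbf{V}})$, and let $\mathcal{A}=\{\mathbf{A}\in\mathbb{R}^{d_1\times d_2}:\mathrm{col}(\mathbf{A}^T)\subseteq\mathrm{col}(\overline{\mathbf{V}}),\ \mathrm{col}(\mathbf{A})\subseteq\mathrm{col}(\overline{\mathbf{U}})\}$, a linear subspace. Let $\hat{\mathbf{X}}=\Pi_{\mathcal{A}}(\mathbf{Y})$. Then $\mathbf{X}=\Pi_r(\hat{\mathbf{X}})$.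
   Context: $\Pi_r(\mathbf{M})$ denotes a best rank-$\le r$ approximation of a matrix $\mathbf{M}$ in Frobenius norm (rank-$r$ truncated SVD); $\Pi_{\mathcal{A}}$ is the orthogonal (Frobenius) projection onto the subspace $\mathcal{A}$; $\mathrm{col}(\cdot)$ denotes column space. *)

(* Defs.v *)
From HB Require Import structures.
From mathcomp Require Import all_boot all_order all_algebra.
Set Implicit Arguments. Unset Strict Implicit. Unset Printing Implicit Defensive.
Import Order.TTheory GRing.Theory Num.Theory.
Local Open Scope ring_scope.

Definition frob_dot (R : ringType) (m n : nat) (M N : 'M[R]_(m, n)) : R :=
  \sum_(i < m) \sum_(j < n) M i j * N i j.

Definition frob2 (R : ringType) (m n : nat) (M : 'M[R]_(m, n)) : R :=
  frob_dot M M.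

Definition col_sub (R : fieldType) (m n p : nat) (A : 'M[R]_(m, n)) (B : 'M[R]_(m, p)) : bool :=
  (A^T <= B^T)%MS.

(* X is a best rank-<= r approximation of Y in Frobenius norm ("X = Pi_r(Y)") *)
Definition is_best_rank_approx (R : realFieldType) (m n r : nat)
    (Y X : 'M[R]_(m, n)) : Prop :=
  (\rank X <= r)%N /\
  forall Z : 'M[R]_(m, n), (\rank Z <= r)%N -> frob2 (Y - X) <= frob2 (Y - Z).

(* Xh is the orthogonal (Frobenius) projection of Y onto the subspace
   described by the predicate S ("Xh = Pi_S(Y)") *)
Definition is_orth_proj (R : realFieldType) (m n : nat)
    (S : 'M[R]_(m, n) -> Prop) (Y Xh : 'M[R]_(m, n)) : Prop :=
  S Xh /\ forall A, S A -> frob_dot (Y - Xh) A = 0.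

Definition subspaceA (R : fieldType) (d1 d2 K : nat)
    (Ub : 'M[R]_(d1, K)) (Vb : 'M[R]_(d2, K)) (A : 'M[R]_(d1, d2)) : Prop :=
  col_sub A^T Vb /\ col_sub A Ub.

(* Main.v *)
Require Import Defs.
From HB Require Import structures.
From mathcomp Require Import all_boot all_order all_algebra.
From mathcomp Require Import ring lra.
Import Order.TTheory GRing.Theory Num.Theory.
Local Open Scope ring_scope.
Set Implicit Arguments. Unset Strict Implicit.

Section Aux.
Variable R : realFieldType.

Lemma mx_tr_eq0 m n (M : 'M[R]_(m, n)) : M *m M^T = 0 -> M = 0.
Proof.
move=> h; apply/matrixP => i j; rewrite mxE.
have := congr1 (fun A : 'M[R]_m => A i i) h; rewrite !mxE => /eqP.
rewrite psumr_eq0; last by move=> k _; rewrite mxE -expr2 sqr_ge0.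
move/allP => /(_ j (mem_index_enum _)) /=; rewrite mxE -expr2 sqrf_eq0.
by move/eqP.
Qed.

Section Proj.
Variables (k n : nat) (W : 'M[R]_(k, n)).
Definition projB := row_base W.
Definition projm := projB^T *m invmx (projB *m projB^T) *m projB.

Lemma gram_unit : projB *m projB^T \in unitmx.
Proof.
rewrite -row_free_unit -kermx_eq0; apply/eqP.
set k0 := kermx _.
have h : k0 *m (projB *m projB^T) = 0 := mulmx_ker _.
have h2 : (k0 *m projB) *m (k0 *m projB)^T = 0.
  by rewrite trmx_mul mulmxA -(mulmxA k0) h mul0mx.
apply: (row_free_inj (row_base_free W)).
by rewrite /= mul0mx (mx_tr_eq0 h2).
Qed.

Lemma projm_tr : projm^T = projm.
Proof.
rewrite /projm; move: projB => B.
by rewrite !trmx_mul trmxK trmx_inv trmx_mul trmxK mulmxA.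
Qed.

Lemma projm_sub : (projm <= W)%MS.
Proof. by rewrite -(eq_row_base W) submxMl. Qed.

Lemma proj_gen m r (B : 'M[R]_(r, n)) (D : 'M[R]_(m, r)) :
  B *m B^T \in unitmx -> D *m B *m (B^T *m invmx (B *m B^T) *m B) = D *m B.
Proof.
move=> hu; rewrite !mulmxA -(mulmxA D B) -(mulmxA D (B *m B^T)) mulmxV //.
by rewrite mulmx1.
Qed.

Lemma projm_id m (x : 'M[R]_(m, n)) : (x <= W)%MS -> x *m projm = x.
Proof.
rewrite -(eq_row_base W) => /submxP [D ->].
exact: proj_gen gram_unit.
Qed.

Lemma projm_idem : projm *m projm = projm.
Proof. exact: projm_id projm_sub. Qed.
End Proj.

Lemma frob_trace m n (M N : 'M[R]_(m, n)) : frob_dot M N = \tr (M^T *m N).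
Proof.
rewrite /frob_dot /mxtrace exchange_big; apply: eq_bigr => j _.
by rewrite mxE; apply: eq_bigr => i _; rewrite mxE.
Qed.

Lemma frob_dotC m n (M N : 'M[R]_(m, n)) : frob_dot M N = frob_dot N M.
Proof. by apply: eq_bigr => i _; apply: eq_bigr => j _; rewrite mulrC. Qed.

Lemma frob_dotDr m n (M N1 N2 : 'M[R]_(m, n)) :
  frob_dot M (N1 + N2) = frob_dot M N1 + frob_dot M N2.
Proof.
rewrite /frob_dot -big_split; apply: eq_bigr => i _.
by rewrite -big_split; apply: eq_bigr => j _; rewrite mxE mulrDr.
Qed.

Lemma frob_dotNr m n (M N : 'M[R]_(m, n)) : frob_dot M (- N) = - frob_dot M N.
Proof.
rewrite /frob_dot -sumrN; apply: eq_bigr => i _.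
by rewrite -sumrN; apply: eq_bigr => j _; rewrite mxE mulrN.
Qed.

Lemma frob_dotBr m n (M N1 N2 : 'M[R]_(m, n)) :
  frob_dot M (N1 - N2) = frob_dot M N1 - frob_dot M N2.
Proof. by rewrite frob_dotDr frob_dotNr. Qed.

Lemma frob_dotBl m n (M N1 N2 : 'M[R]_(m, n)) :
  frob_dot (N1 - N2) M = frob_dot N1 M - frob_dot N2 M.
Proof. by rewrite frob_dotC frob_dotBr !(frob_dotC M). Qed.

Lemma frob2_ge0 m n (M : 'M[R]_(m, n)) : 0 <= frob2 M.
Proof. by apply: sumr_ge0 => i _; apply: sumr_ge0 => j _; rewrite -expr2 sqr_ge0. Qed.

Lemma frob2_tr m n (M : 'M[R]_(m, n)) : frob2 M^T = frob2 M.
Proof.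
rewrite /frob2 /frob_dot exchange_big; apply: eq_bigr => j _.
by apply: eq_bigr => i _; rewrite mxE.
Qed.

Lemma frob2_D m n (M N : 'M[R]_(m, n)) :
  frob2 (M + N) = frob2 M + frob2 N + 2 * frob_dot M N.
Proof.
rewrite /frob2 frob_dotDr !(frob_dotC (M + N)) !frob_dotDr (frob_dotC N M).
ring.
Qed.

Lemma frob2_proj_le m n (P : 'M[R]_m) (M : 'M[R]_(m, n)) :
  P^T = P -> P *m P = P -> frob2 (P *m M) <= frob2 M.
Proof.
move=> hT hI.
have eM : M = P *m M + (M - P *m M) by rewrite addrC subrK.
have h0 : frob_dot (P *m M) (M - P *m M) = 0.
  rewrite frob_trace trmx_mul hT mulmxBr !mulmxA -(mulmxA _ P P) hI.
  by rewrite subrr linear0.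
rewrite [X in _ <= frob2 X]eM frob2_D h0 mulr0 addr0 lerDl.
exact: frob2_ge0.
Qed.

Lemma frob2_projr_le m n (P : 'M[R]_n) (M : 'M[R]_(m, n)) :
  P^T = P -> P *m P = P -> frob2 (M *m P) <= frob2 M.
Proof.
move=> hT hI; rewrite -frob2_tr trmx_mul hT -(frob2_tr M).
exact: frob2_proj_le.
Qed.
End Aux.

Theorem mainTheorem7 (R : rcfType) (d1 d2 r K : nat)
  (Y X : 'M[R]_(d1, d2))
  (U : 'M[R]_(d1, r)) (s : 'rV[R]_r) (V : 'M[R]_(d2, r))
  (Ub : 'M[R]_(d1, K)) (Vb : 'M[R]_(d2, K)) (Xh : 'M[R]_(d1, d2)) :
  (0 < r)%N -> (r <= K)%N ->
  is_best_rank_approx r Y X ->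
  (* SVD of X: orthonormal columns, nonnegative diagonal *)
  U^T *m U = 1%:M -> V^T *m V = 1%:M -> (forall i, 0 <= s 0 i) ->
  X = U *m diag_mx s *m V^T ->
  col_sub U Ub -> col_sub V Vb ->
  is_orth_proj (subspaceA Ub Vb) Y Xh ->
  is_best_rank_approx r Xh X.
Proof.
move=> r0 rK [rkX bestX] hU hV hs eX cU cV [[hA1 hA2] orth].
split => // Z rkZ.
rewrite /col_sub trmxK in hA1.
rewrite /col_sub in hA2 cU cV.
set P1 := projm Ub^T; set P2 := projm Vb^T.
have XA : subspaceA Ub Vb X.
  split; rewrite /col_sub.
    by rewrite trmxK eX; apply: submx_trans (submxMl _ _) cV.
  by rewrite eX !trmx_mul trmxK mulmxA; apply: submx_trans (submxMl _ _) cU.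
set Z' := P1 *m Z *m P2.
have ZA : subspaceA Ub Vb Z'.
  split; rewrite /col_sub.
    by rewrite trmxK; apply: submx_trans (submxMl _ _) (projm_sub _).
  rewrite /Z' (trmx_mul (P1 *m Z) P2) (trmx_mul P1 Z) !projm_tr mulmxA.
  by apply: submx_trans (submxMl _ _) (projm_sub _).
have rkZ' : (\rank Z' <= r)%N.
  exact: leq_trans (mxrankM_maxl _ _) (leq_trans (mxrankM_maxr _ _) rkZ).
have hP2 : Xh *m P2 = Xh by apply: projm_id.
have hP1 : P1 *m Xh = Xh.
  by apply: trmx_inj; rewrite (trmx_mul P1 Xh) projm_tr projm_id.
have eD : Xh - Z' = P1 *m (Xh - Z) *m P2.
  by rewrite mulmxBr mulmxBl hP1 hP2.
have pyth : forall W, subspaceA Ub Vb W ->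
    frob2 (Y - W) = frob2 (Y - Xh) + frob2 (Xh - W).
  move=> W hW.
  have -> : Y - W = (Y - Xh) + (Xh - W) by rewrite addrA subrK.
  have o1 : frob_dot (Y - Xh) Xh = 0 by apply: orth; split; rewrite /col_sub ?trmxK.
  by rewrite frob2_D frob_dotBr o1 (orth W hW) subrr mulr0 addr0.
have := bestX Z' rkZ'; rewrite (pyth X XA) (pyth Z' ZA) lerD2l => h.
apply: (le_trans h); rewrite eD.
apply: le_trans (frob2_projr_le _ _ _) _; first exact: projm_tr.
  exact: projm_idem.
apply: frob2_proj_le; [exact: projm_tr | exact: projm_idem].
Qed.
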